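(* Let $(X_B,X_C,X_R)$ be an OCC of a graph $G$, let $f_X \colon X_B\to\{0,1\}$ be a proper $2$-coloring of $G[X_B]$, and let $B^\ast \subseteq X_B$ satisfy property $(\star)$ with respect to $G$, $(X_B,X_C,X_R)$ and $f_X$. Let $C_1, C_2 \subseteq X_C$ be disjoint and let $f_C \colon C_1 \to \{0,1\}$ be an arbitrary (not necessarily proper) $2$-coloring. Define $A := \{b \in X_B : b$ has a neighbor $c \in C_1$ with $f_X(b) = f_C(c)\}$, $R := \{b \in X_B : b$ has a neighbor $c \in C_1$ with $f_X(b) \neq f_C(c)\}$, and $N := N_G(C_2) \cap X_B$. If $G[X_B]$ has an $\{A,R,N\}$-separator of size at most $|X_C|$, then $B^\ast$ contains a minimum-size $\{A,R,N\}$-separator of $G[X_B]$.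
   Context: An odd cycle cut (OCC) of $G$ is a partition $(X_B, X_C, X_R)$ of $V(G)$ such that $G[X_B]$ is bipartite, there is no edge between $X_B$ and $X_R$, and $X_B \cup X_C \neq \emptyset$. A vertex set $X$ separates vertex sets $S,T$ in a graph if no connected component of the graph minus $X$ contains both a vertex of $S$ and a vertex of $T$ ($X$ may intersect $S\cup T$); a $\{T_1,\dots,T_m\}$-separator separates $T_i$ and $T_j$ for all $i\ne j$. Auxiliary graph: $G_{\mathrm{aux}}$ is obtained from a copy of $G[X_B]$ by adding, for each $v \in X_C$, two new vertices $v^{(0)}, v^{(1)}$, and for each $u \in N_G(v) \cap X_B$ the edge $v^{(f_X(u))}u$; let $T := \{v^{(i)} : v \in X_C, i \in \{0,1\}\}$, so $|T| = 2|X_C|$. Property $(\star)$ of a set $B^\ast \subseteq X_B$: for every partition $(T_1,T_2,T_3,T_X)$ of $T$ into four possibly empty parts, if there exists $S \subseteq X_B$ with $|S| \le |T|$ such that $S$ separates $T_i$ and $T_j$ in $G_{\mathrm{aux}} - T_X$ for all $1 \le i < j \le 3$, then $B^\ast$ contains such a set $S$ of minimum possible size. (Such a $B^\ast$ with $|B^\ast| = |X_C|^{\mathcal{O}(1)}$ is computable in time $2^{\mathcal{O}(|X_C|)} n^{\mathcal{O}(1)}$.) *)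

(* Defs.v *)
From mathcomp Require Import all_boot.
Set Implicit Arguments. Unset Strict Implicit. Unset Printing Implicit Defensive.

(* A simple graph: vertex type T : finType, adjacency e : rel T
   (assumed symmetric and irreflexive in the theorem). *)

Definition restr (T : finType) (e : rel T) (W : {set T}) : rel T :=
  [rel x y | [&& x \in W, y \in W & e x y]].

(* In the graph (V, e) (i.e. G[V]), the vertex set X separates S and U:
   no connected component of G[V] - X contains both a vertex of S and of U.
   X may intersect S and U. *)
Definition separates (T : finType) (e : rel T) (V X S U : {set T}) : Prop :=
  forall s u, s \in S -> u \in U -> s \in V :\: X -> u \in V :\: X ->
    ~~ connect (restr e (V :\: X)) s u.

Definition separates3 (T : finType) (e : rel T) (V X S1 S2 S3 : {set T}) : Prop :=
  [/\ separates e V X S1 S2, separates e V X S1 S3 & separates e V X S2 S3].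

Definition bipartite_on (T : finType) (e : rel T) (W : {set T}) : Prop :=
  exists g : T -> bool, forall u v, u \in W -> v \in W -> e u v -> g u != g v.

Definition OCC (T : finType) (e : rel T) (XB XC XR : {set T}) : Prop :=
  [/\ XB :|: XC :|: XR = setT,
      [&& [disjoint XB & XC], [disjoint XB & XR] & [disjoint XC & XR]],
      bipartite_on e XB,
      (forall u v, u \in XB -> v \in XR -> ~~ e u v)
    & XB :|: XC != set0].

Definition proper2col (T : finType) (e : rel T) (XB : {set T}) (f : T -> bool) : Prop :=
  forall u v, u \in XB -> v \in XB -> e u v -> f u != f v.

(* Auxiliary graph: vertices inl u (copy of u in XB) and inr (v, i) = v^(i)
   for v in XC, i in {0,1} (false = 0, true = 1). *)
Definition auxV (T : finType) := (T + (T * bool))%type.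

Definition aux_vertices (T : finType) (XB XC : {set T}) : {set auxV T} :=
  (inl @: XB) :|: [set x : auxV T | if x is inr (v, _) then v \in XC else false].

Definition aux_terminals (T : finType) (XC : {set T}) : {set auxV T} :=
  [set x : auxV T | if x is inr (v, _) then v \in XC else false].

Definition aux_edge (T : finType) (e : rel T) (XB XC : {set T}) (f : T -> bool)
  : rel (auxV T) :=
  fun x y =>
    match x, y with
    | inl u, inl w => [&& u \in XB, w \in XB & e u w]
    | inl u, inr (v, i) => [&& u \in XB, v \in XC, e v u & i == f u]
    | inr (v, i), inl u => [&& u \in XB, v \in XC, e v u & i == f u]
    | inr _, inr _ => false
    end.

Definition part4 (A : finType) (Tset T1 T2 T3 TX : {set A}) : Prop :=
  T1 :|: T2 :|: T3 :|: TX = Tset /\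
  [&& [disjoint T1 & T2], [disjoint T1 & T3], [disjoint T1 & TX],
      [disjoint T2 & T3], [disjoint T2 & TX] & [disjoint T3 & TX]].

Definition aux_sep (T : finType) (e : rel T) (XB XC : {set T}) (f : T -> bool)
  (S : {set T}) (T1 T2 T3 TX : {set auxV T}) : Prop :=
  separates3 (aux_edge e XB XC f) (aux_vertices XB XC :\: TX) (inl @: S) T1 T2 T3.

Definition star_property (T : finType) (e : rel T) (XB XC : {set T}) (f : T -> bool)
  (Bst : {set T}) : Prop :=
  forall T1 T2 T3 TX : {set auxV T},
    part4 (aux_terminals XC) T1 T2 T3 TX ->
    (exists S : {set T}, [/\ S \subset XB, #|S| <= #|aux_terminals XC|
                           & aux_sep e XB XC f S T1 T2 T3 TX]) ->
    exists S : {set T}, [/\ S \subset Bst, aux_sep e XB XC f S T1 T2 T3 TX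
      & forall S' : {set T}, S' \subset XB -> aux_sep e XB XC f S' T1 T2 T3 TX ->
                             #|S| <= #|S'| ].

(* Main.v *)
Require Import Defs.
From mathcomp Require Import all_boot.

Lemma conn_inv (A : finType) (r : rel A) (P : pred A) :
  (forall x y, P x -> r x y -> P y) -> forall x y, P x -> connect r x y -> P y.
Proof.
move=> H x y Px /connectP [p pp ->].
elim: p x Px pp => //= z p IH x Px /andP[rxz pz]; exact: IH (H _ _ Px rxz) pz.
Qed.

Lemma conn_map (A B : finType) (r : rel A) (r' : rel B) (h : A -> B) :
  (forall x y, r x y -> r' (h x) (h y)) -> forall x y, connect r x y -> connect r' (h x) (h y).
Proof.
move=> H x y; apply: (@conn_inv A r (fun z => connect r' (h x) (h z))) => //.
move=> u v cu ruv; apply: connect_trans cu (connect1 (H _ _ ruv)).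
Qed.

Lemma sep_sym (T : finType) (e : rel T) V X S U : symmetric e ->
  separates e V X S U -> separates e V X U S.
Proof.
move=> es H s u sU uS sV uV; rewrite sym_connect_sym; first exact: H.
by move=> x y; rewrite /restr /= es andbCA.
Qed.

Lemma sep_union (T : finType) (e : rel T) V X U W1 W2 :
  separates e V X U W1 -> separates e V X U W2 -> separates e V X U (W1 :|: W2).
Proof. move=> H1 H2 s u sU; rewrite inE => /orP[]; [exact: H1|exact: H2]. Qed.

Lemma inl_imset (T : finType) (S : {set T}) b :
  (inl b \in (inl @: S : {set auxV T})) = (b \in S).
Proof. apply: mem_imset => x y [] //. Qed.

Lemma inr_imset (T : finType) (S : {set T}) x :
  (inr x \in (inl @: S : {set auxV T})) = false.
Proof. by apply/imsetP => [[y _]]. Qed.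

Lemma L1 (T : finType) (e : rel T) XB XC (f : T -> bool) (S : {set T})
  (TX Ti : {set auxV T}) (Ui Uo : {set T}) :
  (forall c j b, inr (c,j) \in Ti -> aux_edge e XB XC f (inr (c,j)) (inl b) -> b \in Ui) ->
  (forall c j b, inr (c,j) \in aux_vertices XB XC :\: TX -> inr (c,j) \notin Ti ->
      aux_edge e XB XC f (inr (c,j)) (inl b) -> b \in Uo) ->
  separates e XB S Ui Uo ->
  forall c j y, inr (c,j) \in Ti ->
    connect (restr (aux_edge e XB XC f) (aux_vertices XB XC :\: TX :\: inl @: S)) (inr (c,j)) y ->
    (if y is inr _ then y \in Ti else true).
Proof.
move=> Hi Ho Hsep c j y tT.
pose P := fun x : auxV T => match x with
  | inl b => [exists a in Ui, (a \in XB :\: S) && connect (restr e (XB :\: S)) a b]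
  | inr _ => x \in Ti end.
have HP : forall x y, P x -> restr (aux_edge e XB XC f) (aux_vertices XB XC :\: TX :\: inl @: S) x y -> P y.
  move=> [b|[c' j']] [b'|[c'' j'']] /=.
  - case/exists_inP=> a aU /andP[aW cab] /and3P[bW b'W /and3P[bB b'B ebb']].
    apply/exists_inP; exists a => //; rewrite aW /=.
    apply: connect_trans cab (connect1 _).
    move: bW b'W; rewrite !inE !inl_imset => /and3P[nb _ _] /and3P[nb' _ _].
    by rewrite /restr /= !inE nb nb' bB b'B ebb'.
  - case/exists_inP=> a aU /andP[aW cab] /and3P[bW tW ed].
    case tin: (inr (c'', j'') \in Ti) => //; exfalso.
    move: tW; rewrite in_setD inr_imset /= => tV.
    have ed' : aux_edge e XB XC f (inr (c'', j'')) (inl b) by move: ed => /=.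
    have bU := Ho _ _ _ tV (negbT tin) ed'.
    have bW' : b \in XB :\: S.
      by move: bW ed; rewrite !inE inl_imset => /and3P[-> _ _] /= /andP[->].
    by move/negP: (Hsep _ _ aU bU aW bW').
  - move=> tT' /and3P[tW bW ed].
    have bU := Hi _ _ _ tT' ed.
    have bW' : b' \in XB :\: S.
      by move: bW ed; rewrite !inE inl_imset => /and3P[-> _ _] /= /andP[->].
    by apply/exists_inP; exists b' => //; rewrite bW' connect0.
  - by move=> _ /and3P[_ _].
move=> Hc; have := @conn_inv _ _ P HP (inr (c,j)) y tT Hc.
by case: y Hc.
Qed.

Lemma L1' (T : finType) (e : rel T) XB XC (f : T -> bool) (S : {set T})
  (TX Ti Tj : {set auxV T}) (Ui Uo : {set T}) :
  (forall x, x \in Ti -> x \in Tj -> False) ->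
  (forall b, inl b \notin Ti) -> (forall b, inl b \notin Tj) ->
  (forall c j b, inr (c,j) \in Ti -> aux_edge e XB XC f (inr (c,j)) (inl b) -> b \in Ui) ->
  (forall c j b, inr (c,j) \in aux_vertices XB XC :\: TX -> inr (c,j) \notin Ti ->
      aux_edge e XB XC f (inr (c,j)) (inl b) -> b \in Uo) ->
  separates e XB S Ui Uo ->
  separates (aux_edge e XB XC f) (aux_vertices XB XC :\: TX) (inl @: S) Ti Tj.
Proof.
move=> Hd Hl Hl' Hi Ho Hs [b|[c j]] u sT uT _ _; first by rewrite (negbTE (Hl b)) in sT.
apply/negP => Hc; have := @L1 _ _ _ _ _ _ _ _ _ _ Hi Ho Hs _ _ _ sT Hc.
case: u uT Hc => [b|p] uT _ //; first by rewrite (negbTE (Hl' b)) in uT.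
move=> uTi; exact: Hd _ uTi uT.
Qed.

Lemma L2 (T : finType) (e : rel T) XB XC (f : T -> bool) (S : {set T})
  (TX TU TW : {set auxV T}) (U W : {set T}) :
  (forall b, inl b \notin TX) ->
  (forall u, u \in U -> exists2 p, inr p \in TU &
     (inr p \in aux_vertices XB XC :\: TX) && aux_edge e XB XC f (inr p) (inl u)) ->
  (forall u, u \in W -> exists2 p, inr p \in TW &
     (inr p \in aux_vertices XB XC :\: TX) && aux_edge e XB XC f (inr p) (inl u)) ->
  separates (aux_edge e XB XC f) (aux_vertices XB XC :\: TX) (inl @: S) TU TW ->
  separates e XB S U W.
Proof.
move=> HX HU HW Hs u w uU wW uV wV; apply/negP => cuw.
have [p pT /andP[pV pe]] := HU u uU.
have [q qT /andP[qV qe]] := HW w wW.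
have pV' : inr p \in aux_vertices XB XC :\: TX :\: inl @: S by rewrite in_setD inr_imset pV.
have qV' : inr q \in aux_vertices XB XC :\: TX :\: inl @: S by rewrite in_setD inr_imset qV.
have inV : forall b, b \in XB :\: S -> inl b \in aux_vertices XB XC :\: TX :\: inl @: S.
  move=> b; rewrite !inE inl_imset (negbTE (HX b)) /=.
  by move=> /andP[-> bB] /=; rewrite orbF; apply/imsetP; exists b.

move: (Hs _ _ pT qT pV' qV'); apply/negP/negPn.
apply: (@connect_trans _ _ (inl u)).
  by apply: connect1; rewrite /restr /= pV' inV.
apply: (@connect_trans _ _ (inl w)).
  apply: (@conn_map _ _ _ _ inl _ u w) cuw.
  move=> x y /and3P[xW yW exy]; rewrite /restr /= !inV //=.
  by move: xW yW; rewrite !inE => /andP[_ ->] /andP[_ ->].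
apply: connect1; rewrite /restr /= qV' inV //=.
Qed.

Theorem mainTheorem15 (T : finType) (e : rel T)
  (e_sym : symmetric e) (e_irr : irreflexive e)
  (XB XC XR : {set T}) (fX : T -> bool) (Bst : {set T})
  (C1 C2 : {set T}) (fC : T -> bool) :
  OCC e XB XC XR ->
  proper2col e XB fX ->
  Bst \subset XB ->
  star_property e XB XC fX Bst ->
  C1 \subset XC -> C2 \subset XC -> [disjoint C1 & C2] ->
  let A := [set b in XB | [exists c in C1, e b c && (fX b == fC c)]] in
  let R := [set b in XB | [exists c in C1, e b c && (fX b != fC c)]] in
  let N := [set b in XB | [exists c in C2, e b c]] in
  (exists S : {set T}, [/\ S \subset XB, #|S| <= #|XC| & separates3 e XB S A R N]) ->
  exists S : {set T}, [/\ S \subset Bst, separates3 e XB S A R N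
    & forall S' : {set T}, S' \subset XB -> separates3 e XB S' A R N -> #|S| <= #|S'| ].
Proof.
move=> occ pc sub star sC1 sC2 dC A R N [S0 [S0sub S0card S0sep]].
pose T1 : {set auxV T} := [set x : auxV T | if x is inr (c, j) then (c \in C1) && (j == fC c) else false].
pose T2 : {set auxV T} := [set x : auxV T | if x is inr (c, j) then (c \in C1) && (j == ~~ fC c) else false].
pose T3 : {set auxV T} := [set x : auxV T | if x is inr (c, j) then (c \in C2) else false].
pose TX : {set auxV T} := [set x : auxV T | if x is inr (c, j) then [&& c \in XC, c \notin C1 & c \notin C2] else false].
have p4 : part4 (aux_terminals XC) T1 T2 T3 TX.
  split.
    apply/setP => [[b|[c j]]]; rewrite !inE //=.
    case c1: (c \in C1).
      by rewrite (subsetP sC1 _ c1) /=; case: j; case: (fC c).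
    case c2: (c \in C2); first by rewrite (subsetP sC2 _ c2) /=.
    by case: (c \in XC).
  apply/and5P; split; [| | | | apply/andP; split]; rewrite disjoints_subset; apply/subsetP => [[b|[c j]]]; rewrite !inE //=.
  all: try by case c1: (c \in C1); [rewrite ?(disjointFr dC c1) | ]; rewrite /= ?andbF //; case: j; case: (fC c); rewrite /= ?andbF ?andbT //.
  by move=> ->; rewrite !andbF.
have card : #|XC| <= #|aux_terminals XC|.
  have inj : injective (fun c : T => (inr (c, false) : auxV T)) by move=> x y [].
  rewrite -(card_imset XC inj); apply: subset_leq_card.
  by apply/subsetP => _ /imsetP[c cX ->]; rewrite inE.
have H1i : forall c j b, inr (c,j) \in T1 -> aux_edge e XB XC fX (inr (c,j)) (inl b) -> b \in A.
  move=> c j b; rewrite inE => /andP[c1 /eqP ->] /and4P[bB cX ecb /eqP fcb].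
  rewrite /A inE bB /=; apply/exists_inP; exists c => //.
  by rewrite e_sym ecb fcb eqxx.
have H2i : forall c j b, inr (c,j) \in T2 -> aux_edge e XB XC fX (inr (c,j)) (inl b) -> b \in R.
  move=> c j b; rewrite inE => /andP[c1 /eqP ->] /and4P[bB cX ecb /eqP fcb].
  rewrite /R inE bB /=; apply/exists_inP; exists c => //.
  by rewrite e_sym ecb -fcb; case: (fC c).
have H3i : forall c j b, inr (c,j) \in T3 -> aux_edge e XB XC fX (inr (c,j)) (inl b) -> b \in N.
  move=> c j b; rewrite inE => c2 /and4P[bB cX ecb _].
  rewrite /N inE bB /=; apply/exists_inP; exists c => //.
  by rewrite e_sym.
have H1o : forall c j b, inr (c,j) \in aux_vertices XB XC :\: TX -> inr (c,j) \notin T1 ->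
      aux_edge e XB XC fX (inr (c,j)) (inl b) -> b \in R :|: N.
  move=> c j b; rewrite !inE /= => /andP[nX /orP[/imsetP[? _ //]|cX]] nT1 /and4P[bB _ ecb /eqP fcb].
  case c1: (c \in C1).
    rewrite c1 /= in nT1; apply/orP; left.
    rewrite bB /=; apply/exists_inP; exists c => //.
    by rewrite e_sym ecb /= -fcb.
  move: nX; rewrite cX c1 /= negbK => c2.
  apply/orP; right; rewrite bB /=; apply/exists_inP; exists c => //.
  by rewrite e_sym.
have H2o : forall c j b, inr (c,j) \in aux_vertices XB XC :\: TX -> inr (c,j) \notin T2 ->
      aux_edge e XB XC fX (inr (c,j)) (inl b) -> b \in A :|: N.
  move=> c j b; rewrite !inE /= => /andP[nX /orP[/imsetP[? _ //]|cX]] nT2 /and4P[bB _ ecb /eqP fcb].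
  case c1: (c \in C1).
    rewrite c1 /= in nT2; apply/orP; left.
    rewrite bB /=; apply/exists_inP; exists c => //.
    by rewrite e_sym ecb /= -fcb; clear fcb; move: nT2; case: j; case: (fC c).
  move: nX; rewrite cX c1 /= negbK => c2.
  apply/orP; right; rewrite bB /=; apply/exists_inP; exists c => //.
  by rewrite e_sym.
have toaux : forall S, separates3 e XB S A R N -> aux_sep e XB XC fX S T1 T2 T3 TX.
  move=> S [sAR sAN sRN]; split.
  - eapply L1'; [| | | exact: H1i | exact: H1o | idtac]; try by move=> b; rewrite inE.
      move=> [b|[c j]]; rewrite !inE //=.
      by move=> /andP[_ /eqP ->] /andP[_]; case: (fC c).
    exact: sep_union sAR sAN.
  - eapply L1'; [| | | exact: H1i | exact: H1o | idtac]; try by move=> b; rewrite inE.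
      move=> [b|[c j]]; rewrite !inE //=.
      by move=> /andP[c1 _]; rewrite (disjointFr dC c1).
    exact: sep_union sAR sAN.
  - eapply L1'; [| | | exact: H2i | exact: H2o | idtac]; try by move=> b; rewrite inE.
      move=> [b|[c j]]; rewrite !inE //=.
      by move=> /andP[c1 _]; rewrite (disjointFr dC c1).
    apply: sep_union sRN; exact: sep_sym e_sym sAR.
have HX : forall b, inl b \notin TX by move=> b; rewrite inE.
have WA : forall u, u \in A -> exists2 p, inr p \in T1 &
     (inr p \in aux_vertices XB XC :\: TX) && aux_edge e XB XC fX (inr p) (inl u).
  move=> u; rewrite /A inE => /andP[uB /exists_inP[c c1 /andP[euc /eqP fuc]]].
  have cX := subsetP sC1 _ c1.
  exists (c, fC c); first by rewrite inE c1 eqxx.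
  by rewrite !inE /= cX c1 /= orbT uB e_sym euc fuc eqxx.
have WR : forall u, u \in R -> exists2 p, inr p \in T2 &
     (inr p \in aux_vertices XB XC :\: TX) && aux_edge e XB XC fX (inr p) (inl u).
  move=> u; rewrite /R inE => /andP[uB /exists_inP[c c1 /andP[euc fuc]]].
  have cX := subsetP sC1 _ c1.
  exists (c, ~~ fC c); first by rewrite inE c1 eqxx.
  rewrite !inE /= cX c1 /= orbT uB e_sym euc /=.
  by move: fuc; case: (fX u); case: (fC c).
have WN : forall u, u \in N -> exists2 p, inr p \in T3 &
     (inr p \in aux_vertices XB XC :\: TX) && aux_edge e XB XC fX (inr p) (inl u).
  move=> u; rewrite /N inE => /andP[uB /exists_inP[c c2 euc]].
  have cX := subsetP sC2 _ c2.
  exists (c, fX u); first by rewrite inE c2.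
  by rewrite !inE /= cX c2 /= !andbF orbT uB e_sym euc eqxx.
have fromaux : forall S, aux_sep e XB XC fX S T1 T2 T3 TX -> separates3 e XB S A R N.
  move=> S [s12 s13 s23]; split.
  - exact: L2 HX WA WR s12.
  - exact: L2 HX WA WN s13.
  - exact: L2 HX WR WN s23.
have [S [SB Ssep Smin]] : exists S : {set T}, [/\ S \subset Bst, aux_sep e XB XC fX S T1 T2 T3 TX
      & forall S' : {set T}, S' \subset XB -> aux_sep e XB XC fX S' T1 T2 T3 TX ->
                             #|S| <= #|S'| ].
  apply: star p4 _; exists S0; split => //; first exact: leq_trans S0card card.
  exact: toaux.
exists S; split => //; first exact: fromaux.
move=> S' S'B S'sep; exact: Smin S'B (toaux _ S'sep).
Qed.
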